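(* Let $T$ be a tree of order $n\ge 3$. Then $\chi'_{qm\Sigma}(T)=2$ if $T$ has no two adjacent vertices of equal even degree, and $\chi'_{qm\Sigma}(T)=3$ otherwise.
   Context: A $k$-edge-coloring of $G$ is any map $c:E(G)\to\{1,\dots,k\}$ (adjacent edges may share colors). It induces $\sigma_c(v)=\sum_{u\in N(v)}c(vu)$. The coloring is neighbor sum distinguishing (NSD) if $\sigma_c(u)\ne\sigma_c(v)$ for every edge $uv$. It is quasi-majority if every vertex $v$ is incident to at most $\lceil d(v)/2\rceil$ edges of each single color. $\chi'_{qm\Sigma}(G)$ denotes the least $k$ such that $G$ has a $k$-edge-coloring that is both quasi-majority and NSD. *)

(* Defs.v *)
From mathcomp Require Import all_boot.
Set Implicit Arguments. Unset Strict Implicit. Unset Printing Implicit Defensive.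

Definition simple_graph (V : finType) (e : rel V) : Prop :=
  symmetric e /\ irreflexive e.

Definition connected_graph (V : finType) (e : rel V) : Prop :=
  forall u v : V, connect e u v.

Definition acyclic (V : finType) (e : rel V) : Prop :=
  forall (x : V) (p : seq V),
    2 <= size p -> uniq (x :: p) -> path e x p -> e (last x p) x -> False.

Definition is_tree (V : finType) (e : rel V) : Prop :=
  simple_graph e /\ connected_graph e /\ acyclic e.

Definition deg (V : finType) (e : rel V) (v : V) : nat := #|[set u | e v u]|.

(* A k-edge-coloring: c v u is the color of edge vu; it must be symmetric on
   edges and take values in {1,...,k} on edges (values on non-edges are irrelevant). *)
Definition edge_coloring (V : finType) (e : rel V) (k : nat) (c : V -> V -> nat) : Prop :=
  forall u v, e u v -> c u v = c v u /\ 1 <= c u v <= k.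

Definition sigma (V : finType) (e : rel V) (c : V -> V -> nat) (v : V) : nat :=
  \sum_(u | e v u) c v u.

Definition nsd (V : finType) (e : rel V) (c : V -> V -> nat) : Prop :=
  forall u v, e u v -> sigma e c u <> sigma e c v.

(* quasi-majority: at most ceil(d(v)/2) = (d(v)+1)/2 incident edges of each color *)
Definition quasi_majority (V : finType) (e : rel V) (c : V -> V -> nat) : Prop :=
  forall (v : V) (i : nat), #|[set u | e v u & c v u == i]| <= (deg e v).+1 %/ 2.

Definition has_qm_nsd_coloring (V : finType) (e : rel V) (k : nat) : Prop :=
  exists c : V -> V -> nat, [/\ edge_coloring e k c, quasi_majority e c & nsd e c].

Definition chi_qm_sigma_eq (V : finType) (e : rel V) (k : nat) : Prop :=
  has_qm_nsd_coloring e k /\ forall j, j < k -> ~ has_qm_nsd_coloring e j.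

(* Main.v *)
Require Import Defs.
From mathcomp Require Import all_boot zify.
Set Implicit Arguments. Unset Strict Implicit. Unset Printing Implicit Defensive.

Definition H2 (d c s : nat) : seq nat :=
  let n := d - (c != 0) in
  let u := d.+1 %/ 2 - (c == 2) in
  let x := if n == 0 then 0 else if odd d && (c + n + u == s) then u.-1 else u in
  nseq x 2 ++ nseq (n - x) 1.

Lemma oddE d : d = d %/ 2 * 2 + odd d.
Proof. by rewrite -modn2 -divn_eq. Qed.

Ltac h2_tac :=
  rewrite /H2 /=; move=> *;
  repeat match goal with |- context [if ?b then _ else _] => case: ifP end;
  rewrite ?count_cat ?count_nseq ?sumn_cat ?sumn_nseq ?size_cat ?size_nseq /=;
  intros; lia.

Lemma H2_size d c s : 1 <= d -> c <= 2 -> size (H2 d c s) = d - (c != 0).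
Proof.
move=> d1 c2; have := oddE d; rewrite /H2 /=.
case: (odd d) => /= hd; case: c c2 => [|[|[|]]] //= _;
repeat case: ifP => /=; rewrite ?size_cat ?size_nseq; lia.
Qed.

Lemma H2_range d c s x : x \in H2 d c s -> 1 <= x <= 2.
Proof. by rewrite /H2 mem_cat !mem_nseq => /orP[] /andP[_ /eqP->]. Qed.

Lemma H2_qm d c s i : 1 <= d -> c <= 2 ->
  ((c != 0) && (c == i)) + count (pred1 i) (H2 d c s) <= d.+1 %/ 2.
Proof.
move=> d1 c2; have := oddE d; rewrite /H2 /= count_cat !count_nseq /=.
case: (odd d) => /= hd; case: c c2 => [|[|[|]]] //= _;
case: i => [|[|[|i]]] /=; repeat case: ifP => /=; lia.
Qed.

Lemma H2_val d c s : 1 <= d -> c <= 2 ->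
  (~~ odd d -> c + sumn (H2 d c s) = 3 * (d %/ 2)) /\
  (odd d -> c + sumn (H2 d c s) = 3 * (d %/ 2) + 1 \/ c + sumn (H2 d c s) = 3 * (d %/ 2) + 2).
Proof.
move=> d1 c2; have := oddE d; rewrite /H2 /= sumn_cat !sumn_nseq /=.
case: (odd d) => /= hd; case: c c2 => [|[|[|]]] //= _;
repeat case: ifP => /=; lia.
Qed.

Lemma H2_nsd d c s : c != 0 -> c <= 2 -> 1 <= d -> c < s ->
  (~~ odd d -> s != 3 * (d %/ 2)) -> c + sumn (H2 d c s) != s.
Proof.
move=> c0 c2 d1 cs; have := oddE d; rewrite /H2 /= sumn_cat !sumn_nseq /=.
case: (odd d) => /= hd; case: c c0 c2 cs => [|[|[|]]] //= _ _ cs;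
repeat case: ifP => /=; try move/eqP; lia.
Qed.

Definition H3 (d c s : nat) : seq nat :=
  if c == 0 then H2 d 0 s else
  let n := d - 1 in let h := d.+1 %/ 2 in
  let a := if c == 1 then 2 else 1 in let b := if c == 3 then 2 else 3 in
  let t := if n == 0 then 0 else if c + a * h + b * (n - h) == s then h.-1 else h in
  nseq t a ++ nseq (n - t) b.

Lemma H3_size d c s : 1 <= d -> c <= 3 -> size (H3 d c s) = d - (c != 0).
Proof.
move=> d1 c3; rewrite /H3; have [_|c0] := eqVneq c 0; first exact: H2_size.
have := oddE d; rewrite /=.
case: (odd d) => /= hd; case: c c0 c3 => [|[|[|[|]]]] //= _ _;
repeat case: ifP => /=; rewrite ?size_cat ?size_nseq; lia.
Qed.

Lemma H3_range d c s x : x \in H3 d c s -> 1 <= x <= 3.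
Proof.
rewrite /H3; case: ifP => _; first by move/H2_range => /andP[h1 h2]; rewrite h1 (leq_trans h2).
by rewrite /= mem_cat !mem_nseq => /orP[] /andP[_ /eqP->]; repeat case: ifP.
Qed.

Lemma H3_qm d c s i : 1 <= d -> c <= 3 ->
  ((c != 0) && (c == i)) + count (pred1 i) (H3 d c s) <= d.+1 %/ 2.
Proof.
move=> d1 c3; rewrite /H3; have [E|c0] := eqVneq c 0; first by subst c; exact: (@H2_qm d 0 s i d1 isT).
have := oddE d; rewrite /= count_cat !count_nseq /=.
case: (odd d) => /= hd; case: c c0 c3 => [|[|[|[|]]]] //= _ _;
case: i => [|[|[|[|i]]]] /=; repeat case: ifP => /=; lia.
Qed.

Lemma H3_nsd d c s : c != 0 -> c <= 3 -> 1 <= d -> c < s ->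
  c + sumn (H3 d c s) != s.
Proof.
move=> c0 c3 d1 cs; rewrite /H3 (negbTE c0).
have := oddE d; rewrite /= sumn_cat !sumn_nseq /=.
case: (odd d) => /= hd; case: c c0 c3 cs => [|[|[|[|]]]] //= _ _ cs;
repeat case: ifP => /=; try move/eqP; lia.
Qed.

Lemma path_closed (V : finType) (e : rel V) (S : pred V) x q :
  (forall u w, S u -> e u w -> S w) -> S x -> path e x q -> S (last x q).
Proof.
move=> H; elim: q x => //= y q IH x Sx /andP[exy pq]; exact: IH (H x y Sx exy) pq.
Qed.

Lemma exists_deg2 (V : finType) (e : rel V) :
  simple_graph e -> connected_graph e -> 3 <= #|V| -> exists r, 2 <= deg e r.
Proof.
move=> [sym irr] conn cV.
have [a _] : exists a : V, true.
  by have /card_gt0P[a _] : 0 < #|V| by apply: leq_trans cV.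
case: (boolP [exists r, 2 <= deg e r]) => [/existsP[r hr]|]; first by exists r.
rewrite negb_exists => /forallP H.
have le1 x : deg e x <= 1 by have := H x; rewrite -ltnNge ltnS.
have one x y z : e x y -> e x z -> y = z.
  move=> exy exz; apply/eqP; apply: contraT => ne.
  have : #|[set y; z]| <= deg e x.
    apply: subset_leq_card; apply/subsetP => w; rewrite !inE => /orP[]/eqP->.
    by []. by [].
  by rewrite cards2 ne => /leq_trans /(_ (le1 x)).
pose S := [pred w | (w == a) || e a w].
have cl : forall u w, S u -> e u w -> S w.
  move=> u w; rewrite /S /= => /orP[/eqP-> ->|eau euw]; first by rewrite orbT.
  by rewrite (one u w a euw) ?eqxx // sym.
have allS w : S w.
  have /connectP[q pq ->] := conn a w.
  by apply: path_closed cl _ pq; rewrite /S /= eqxx.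
have : #|V| <= #|[set a] :|: [set w | e a w]|.
  rewrite -cardsT; apply: subset_leq_card; apply/subsetP => w _.
  by have := allS w; rewrite /S !inE.
rewrite cardsU1 -/(deg e a).
move=> h2; exfalso; move: (leq_trans cV h2) (le1 a); case: (a \notin _) => /=; lia.
Qed.

Section BFS.
Variables (V : finType) (e : rel V) (r : V).
Hypothesis conn : connected_graph e.

Fixpoint R n : {set V} :=
  if n is n'.+1 then R n' :|: [set y | [exists x in R n', e x y]] else [set r].

Lemma R_mono m n : m <= n -> R m \subset R n.
Proof.
elim: n => [|n IH]; first by rewrite leqn0 => /eqP->.
rewrite leq_eqVlt => /orP[/eqP->//|]; rewrite ltnS => /IH /subset_trans; apply.
by rewrite /= subsetUl.
Qed.

Lemma R_step x y n : x \in R n -> e x y -> y \in R n.+1.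
Proof. by move=> xR exy; rewrite /= !inE; apply/orP; right; apply/existsP; exists x; rewrite xR. Qed.

Lemma R_path x q n : x \in R n -> path e x q -> last x q \in R (n + size q).
Proof.
elim: q x n => [|y q IH] x n /=; first by rewrite addn0.
move=> xR /andP[exy pq]; rewrite addnS -addSn; exact: IH (R_step xR exy) pq.
Qed.

Lemma R_ex v : exists n, v \in R n.
Proof.
have /connectP[q pq ->] := conn r v; exists (0 + size q); apply: R_path pq.
by rewrite /= inE.
Qed.

Definition dep v := ex_minn (R_ex v).

Lemma dep_R v : v \in R (dep v).
Proof. by rewrite /dep; case: ex_minnP. Qed.

Lemma dep_min v n : v \in R n -> dep v <= n.
Proof. by rewrite /dep; case: ex_minnP => m _ H /H. Qed.

Lemma dep_r : dep r = 0.
Proof. by apply/eqP; rewrite -leqn0; apply: dep_min; rewrite /= inE. Qed.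

Lemma dep0 v : dep v = 0 -> v = r.
Proof. by move=> h; have := dep_R v; rewrite h /= inE => /eqP. Qed.

Lemma dep_par v : v != r -> exists x, e x v && ((dep x).+1 == dep v).
Proof.
move=> vr; case E: (dep v) => [|m]; first by rewrite (dep0 E) eqxx in vr.
have := dep_R v; rewrite E /= !inE => /orP[vm|].
  by have := dep_min vm; rewrite E ltnn.
case/existsP => x /andP[xm exv]; exists x; rewrite exv /=.
have dx := dep_min xm; rewrite eqSS eqn_leq dx /=; rewrite leqNgt; apply/negP => lt.
have := dep_min (R_step (dep_R x) exv); rewrite E ltnS => h.
by have := leq_ltn_trans h lt; rewrite ltnn.
Qed.

Definition par v := odflt r [pick x | e x v && ((dep x).+1 == dep v)].

Lemma par_spec v : v != r -> e (par v) v /\ dep v = (dep (par v)).+1.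
Proof.
move=> vr; rewrite /par; case: pickP => [x /andP[-> /eqP->]//|H].
by have [x] := dep_par vr; rewrite H.
Qed.

End BFS.

Section P3.
Variables (V : finType) (e : rel V) (r : V) (p : V -> V) (dep : V -> nat).
Hypotheses (sym : symmetric e) (irr : irreflexive e) (acyc : acyclic e).
Hypothesis pe : forall v, v != r -> e (p v) v.
Hypothesis pd : forall v, v != r -> dep v = (dep (p v)).+1.
Hypothesis dr : dep r = 0.
Hypothesis d0 : forall v, dep v = 0 -> v = r.

Lemma ne_r_dep y : 0 < dep y -> y != r.
Proof. by apply: contraTneq => ->; rewrite dr. Qed.

Lemma iter_dep x k : k <= dep x -> dep (iter k p x) = dep x - k.
Proof.
elim: k => [|k IH] kd /=; first by rewrite subn0.
have h := IH (ltnW kd).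
have yr : iter k p x != r by apply: ne_r_dep; rewrite h; lia.
by have := pd yr; rewrite h; lia.
Qed.

Lemma iter_ne x k : k < dep x -> iter k p x != r.
Proof. by move=> kd; apply: ne_r_dep; rewrite iter_dep ?(ltnW kd) //; lia. Qed.

Lemma iter_top x : iter (dep x) p x = r.
Proof. by apply: d0; rewrite iter_dep // subnn. Qed.

Lemma traj_path y x n : n <= dep x -> (0 < n -> e y x) -> path e y (traject p x n).
Proof.
elim: n x y => [|n IH] x y //= nd eyx; rewrite eyx //=.
have xr : x != r by apply: ne_r_dep; lia.
apply: IH; first by have := pd xr; lia.
by move=> _; rewrite sym pe.
Qed.

Lemma traj_rev_path x n : n <= dep x -> path e (iter n p x) (rev (traject p x n)).
Proof.
elim: n => [|n IH] nd; first by [].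
rewrite trajectSr rev_rcons /= IH ?(ltnW nd) // andbT.
exact: (pe (iter_ne nd)).
Qed.

Lemma traj_uniq x n : n <= (dep x).+1 -> uniq (traject p x n).
Proof.
elim: n => [|n IH] nd; first by [].
rewrite trajectSr rcons_uniq IH ?(ltnW nd) // andbT.
apply/trajectP => [[i lt /(congr1 dep)]].
rewrite !iter_dep; lia.
Qed.

Lemma last_rev_traj x n : last (iter n p x) (rev (traject p x n)) = x.
Proof. by case: n => //= n; rewrite rev_cons last_rcons. Qed.

Lemma P3 u v : e u v -> ((v != r) && (p v == u)) || ((u != r) && (p u == v)).
Proof.
move=> euv; apply: contraT => /norP[h1 h2].
have ex : exists j, [exists i : 'I_(dep u).+1, iter i p u == iter j p v].
  by exists (dep v); apply/existsP; exists ord_max; rewrite /= !iter_top.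
case: (ex_minnP ex) => j /existsP[[i /= ilt] /eqP Eij] jmin.
have jle : j <= dep v.
  by apply: jmin; apply/existsP; exists ord_max; rewrite /= !iter_top.
have ile : i <= dep u by [].
have dw1 := iter_dep jle; have dw2 := iter_dep ile.
exfalso; apply: (@acyc (iter j p v) (rev (traject p u i) ++ traject p v j)).
- rewrite size_cat size_rev !size_traject.
  rewrite leqNgt; apply/negP => lt.
  case: i j lt Eij ilt ile {jmin dw1 dw2} jle => [|[|i]] [|[|j]] //= _.
  + by move=> E; rewrite E irr in euv.
  + move=> E _ _ lj; rewrite E eqxx andbT in h1.
    by move/negP: h1; apply; apply: ne_r_dep.
  + move=> E _ lu _; rewrite -E eqxx andbT in h2.
    by move/negP: h2; apply; apply: ne_r_dep.
- rewrite cons_uniq mem_cat mem_rev negb_or cat_uniq rev_uniq.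
  rewrite traj_uniq ?(leq_trans ile) // traj_uniq ?(leq_trans jle) //= andbT.
  apply/andP; split; [apply/andP; split|].
  + apply/trajectP => [[k lt]]; rewrite -Eij => /(congr1 dep); rewrite dw2 iter_dep; lia.
  + apply/trajectP => [[k lt]] /(congr1 dep); rewrite dw1 iter_dep; lia.
  + apply/hasPn => y /trajectP[k kj ->]; rewrite mem_rev; apply/negP.
    move/trajectP => [k' k'i E].
    have k'lt : k' < (dep u).+1 by lia.
    have : j <= k.
      by apply: jmin; apply/existsP; exists (Ordinal k'lt); rewrite /= E.
    by rewrite leqNgt kj.
- rewrite cat_path -Eij traj_rev_path // last_rev_traj /=.
  by apply: traj_path => //.
- rewrite last_cat -{1}Eij last_rev_traj.
  case: j jle {jmin dw1 Eij} => [|j] jle /=; first by [].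
  rewrite last_traject sym; exact: (pe (iter_ne jle)).
Qed.

End P3.

Section Color.
Variables (V : finType) (e : rel V) (r : V) (p : V -> V) (dep : V -> nat).
Hypotheses (sym : symmetric e) (irr : irreflexive e).
Hypothesis pe : forall v, v != r -> e (p v) v.
Hypothesis pd : forall v, v != r -> dep v = (dep (p v)).+1.
Hypothesis d0 : forall v, dep v = 0 -> v = r.
Hypothesis hP3 : forall u v, e u v -> ((v != r) && (p v == u)) || ((u != r) && (p u == v)).
Hypothesis Hd2 : 2 <= deg e r.
Variables (k : nat) (H : nat -> nat -> nat -> seq nat).
Hypothesis Hsize : forall d c s, 1 <= d -> c <= k -> size (H d c s) = d - (c != 0).
Hypothesis Hrange : forall d c s x, x \in H d c s -> 1 <= x <= k.
Hypothesis Hqm : forall d c s i, 1 <= d -> c <= k ->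
  ((c != 0) && (c == i)) + count (pred1 i) (H d c s) <= d.+1 %/ 2.

Definition children u := [seq w <- enum V | (w != r) && (p w == u)].
Definition rank w := index w (children (p w)).

Fixpoint F n v : nat * nat :=
  if n is n'.+1 then
    if v == r then (0, 0) else
    let cs := F n' (p v) in
    let L := H (deg e (p v)) cs.1 cs.2 in
    (nth 0 L (rank v), cs.1 + sumn L)
  else (0, 0).

Definition st v := F (dep v) v.
Definition L u := H (deg e u) (st u).1 (st u).2.
Definition col x y :=
  if (y != r) && (p y == x) then (st y).1
  else if (x != r) && (p x == y) then (st x).1 else 1.

Lemma stE v : v != r -> st v = (nth 0 (L (p v)) (rank v), (st (p v)).1 + sumn (L (p v))).
Proof. by move=> vr; rewrite /st (pd vr) /= (negbTE vr). Qed.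

Lemma st_r : st r = (0, 0).
Proof. by rewrite /st; case: (dep r) => //= n; rewrite eqxx. Qed.

Lemma st_le v : (st v).1 <= k.
Proof.
case: (eqVneq v r) => [->|vr]; first by rewrite st_r.
rewrite stE //=; case: (ltnP (rank v) (size (L (p v)))) => lt.
  by case/andP: (Hrange (mem_nth 0 lt)).
by rewrite nth_default.
Qed.

Lemma nbr_disj u w : (u != r) && (w == p u) -> (w != r) && (p w == u) -> False.
Proof.
move=> /andP[ur /eqP wE] /andP[wr /eqP uE].
have := pd ur; have := pd wr; rewrite -wE -uE; lia.
Qed.

Lemma nbr u w : e u w = ((u != r) && (w == p u)) || ((w != r) && (p w == u)).
Proof.
apply/idP/idP.
  by move/hP3; rewrite orbC [p u == w]eq_sym.
case/orP => /andP[xr /eqP E]; first by rewrite E sym pe.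
by rewrite -E pe.
Qed.

Lemma mem_children u w : (w \in children u) = (w != r) && (p w == u).
Proof. by rewrite mem_filter mem_enum andbT. Qed.

Lemma uniq_children u : uniq (children u).
Proof. by rewrite filter_uniq // enum_uniq. Qed.

Lemma sum_nbr (G : V -> nat) u :
  \sum_(w | e u w) G w = (if u != r then G (p u) else 0) + \sum_(w <- children u) G w.
Proof.
rewrite big_mkcond /=.
rewrite (eq_bigr (fun w => (if (u != r) && (w == p u) then G w else 0) +
                          (if (w != r) && (p w == u) then G w else 0))); last first.
  move=> w _; rewrite nbr.
  case A: ((u != r) && (w == p u)); case B: ((w != r) && (p w == u)) => //=.
    by case: (nbr_disj A B).
  by rewrite addn0.
rewrite big_split /=; congr (_ + _).
  case: (eqVneq u r) => [_|ur] /=; first by rewrite big1.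
  rewrite -big_mkcond /=; apply: big_pred1 => w /=; by [].
rewrite -big_mkcond /children big_filter. by rewrite big_enum_cond.
Qed.


Lemma deg_nch u : deg e u = (u != r) + size (children u).
Proof.
rewrite /deg -sum1_card (eq_bigl (fun w => e u w)); last by move=> w; rewrite inE.
by rewrite sum_nbr sum1_size; case: (u != r).
Qed.

Lemma deg_pos u : 1 <= deg e u.
Proof.
case: (eqVneq u r) => [->|ur]; first by apply: leq_trans Hd2.
by rewrite deg_nch ur.
Qed.

Lemma rank_lt v : v != r -> rank v < size (children (p v)).
Proof. by move=> vr; rewrite /rank index_mem mem_children vr eqxx. Qed.

Lemma sizeL_aux u : ((st u).1 != 0) = (u != r) -> size (L u) = size (children u).
Proof.
by move=> E; rewrite /L Hsize ?deg_pos ?st_le // E deg_nch; case: (u != r); rewrite ?subn0 ?add1n ?subSS ?subn0.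
Qed.

Lemma st_nz u : ((st u).1 != 0) = (u != r).
Proof.
suff : forall n u, dep u <= n -> ((st u).1 != 0) = (u != r) by apply; apply: leqnn.
elim=> [|n IH] {}u du.
  by move: du; rewrite leqn0 => /eqP/d0 ->; rewrite st_r eqxx.
case: (eqVneq u r) => [->|ur]; first by rewrite st_r.
rewrite stE //=.
have sz : rank u < size (L (p u)).
  by rewrite sizeL_aux ?rank_lt // IH //; have := pd ur; lia.
by case/andP: (Hrange (mem_nth 0 sz)); case: (nth _ _ _).
Qed.

Lemma sizeL u : size (L u) = size (children u).
Proof. exact/sizeL_aux/st_nz. Qed.


Lemma col_par u : u != r -> col u (p u) = (st u).1.
Proof.
move=> ur; rewrite /col ifN ?ur ?eqxx //; apply/negP => h.
by apply: (nbr_disj (u := u) (w := p u)) => //; rewrite ur eqxx.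
Qed.

Lemma col_child u w : w \in children u -> col u w = (st w).1.
Proof. by rewrite mem_children /col => ->. Qed.

Lemma st_child u w : w \in children u -> (st w).1 = nth 0 (L u) (index w (children u)).
Proof.
move=> wc; have := wc; rewrite mem_children => /andP[wr /eqP pw].
by rewrite stE // /rank pw.
Qed.

Lemma sum_L (g : nat -> nat) u :
  \sum_(w <- children u) g (st w).1 = \sum_(x <- L u) g x.
Proof.
rewrite (eq_big_seq (fun w => g (nth 0 (L u) (index w (children u))))); last first.
  by move=> w wc; rewrite (st_child wc).
rewrite (big_nth u) [RHS](big_nth 0) sizeL /=.
apply: eq_big_nat => i /andP[_ lt].
by rewrite index_uniq // uniq_children.
Qed.

Lemma sum_col (g : nat -> nat) u :
  \sum_(w | e u w) g (col u w) = (if u != r then g (st u).1 else 0) + \sum_(x <- L u) g x.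
Proof.
rewrite sum_nbr -sum_L; congr (_ + _).
  by case: (eqVneq u r) => // ur; rewrite col_par.
by apply: eq_big_seq => w wc; rewrite (col_child wc).
Qed.

Lemma sigma_col u : sigma e col u = (st u).1 + sumn (L u).
Proof.
rewrite /sigma (sum_col id) sumnE; congr (_ + _).
by case: (eqVneq u r) => // ->; rewrite st_r.
Qed.

Lemma count_sum (T : eqType) (a : pred T) (s : seq T) : count a s = \sum_(x <- s) a x.
Proof. by elim: s => [|x s IH]; rewrite ?big_nil ?big_cons //= IH. Qed.

Lemma col_edge : edge_coloring e k col.
Proof.
move=> u w; rewrite nbr => /orP[] h.
  have h' := h; case/andP: h' => ur /eqP wE.
  have hn : ~~ ((w != r) && (p w == u)) by apply/negP => /(nbr_disj h).
  rewrite /col (negbTE hn) wE ur eqxx /=; split => //.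
  by rewrite st_le andbT lt0n st_nz ur.
have h' := h; case/andP: h' => wr /eqP uE.
have hn : ~~ ((u != r) && (p u == w)).
  by apply/negP => /andP[ur2 /eqP pu]; apply: (nbr_disj (u := u) (w := w) _ h); rewrite ur2 pu eqxx.
rewrite /col h (negbTE hn) /=; split => //.
by rewrite st_le andbT lt0n st_nz wr.
Qed.

Lemma col_qm : quasi_majority e col.
Proof.
move=> u i.
have -> : #|[set w | e u w & col u w == i]| = \sum_(w | e u w) (fun x => (x == i) : nat) (col u w).
  rewrite -sum1_card big_mkcond [RHS]big_mkcond /=; apply: eq_bigr => w _.
  by rewrite inE; case: (e u w); case: (col u w == i).
rewrite (sum_col (fun x => (x == i) : nat)) -count_sum.
have := Hqm (st u).2 i (deg_pos u) (st_le u); rewrite st_nz -/(L u).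
by case: (u != r).
Qed.

Lemma st2 v : v != r -> (st v).2 = sigma e col (p v).
Proof. by move=> vr; rewrite stE // sigma_col. Qed.

Lemma sumn_ge_size (s : seq nat) : (forall x, x \in s -> 1 <= x) -> size s <= sumn s.
Proof.
elim: s => //= x s IH pos.
have pos' : forall z, z \in s -> 1 <= z by move=> z zs; apply: pos; rewrite inE zs orbT.
have := pos x (mem_head x s); have := IH pos'; lia.
Qed.

Lemma sumn_nth (s : seq nat) i : (forall x, x \in s -> 1 <= x) -> i < size s ->
  nth 0 s i + (size s).-1 <= sumn s.
Proof.
elim: s i => [|x s IH] i //= pos.
have pos' : forall z, z \in s -> 1 <= z by move=> z zs; apply: pos; rewrite inE zs orbT.
case: i => [_|i lt] /=.
  by have := sumn_ge_size pos'; have := pos x (mem_head x s); case: (size s) => [|n]; lia.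
have := IH i pos' lt.
have := pos x (mem_head x s); case: (size s) lt => // n _; lia.
Qed.

Lemma st_lt v : v != r -> (st v).1 < (st v).2.
Proof.
move=> vr; rewrite stE //=.
have lt : rank v < size (L (p v)) by rewrite sizeL rank_lt.
have := sumn_nth (fun x xs => (andP (Hrange xs)).1) lt.
case: (eqVneq (p v) r) => [E|pr].
  have := Hd2; rewrite deg_nch -sizeL E /= => h.
  rewrite E in lt * => h2; rewrite eqxx in h; rewrite -/(L r) in h2; rewrite st_r /=; lia.
have := st_nz (p v); rewrite pr -/(L (p v)) => nz h2. have : 0 < (st (p v)).1 by rewrite lt0n nz. lia.
Qed.

Lemma gen_col : exists (c : V -> V -> nat) (st : V -> nat * nat),
  [/\ edge_coloring e k c, quasi_majority e c,
      (forall u, [/\ (st u).1 <= k, ((st u).1 != 0) = (u != r) &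
                   sigma e c u = (st u).1 + sumn (H (deg e u) (st u).1 (st u).2)]) &
      (forall v, v != r -> (st v).2 = sigma e c (p v) /\ (st v).1 < (st v).2)].
Proof.
exists col, st; split; [exact: col_edge | exact: col_qm | | ].
  by move=> u; rewrite st_le st_nz sigma_col.
by move=> v vr; split; [exact: st2 | exact: st_lt].
Qed.

End Color.

Lemma card_sum (V : finType) (e : rel V) (c : V -> V -> nat) u i :
  #|[set w | e u w & c u w == i]| = \sum_(w | e u w) ((c u w == i) : nat).
Proof.
rewrite -sum1_card big_mkcond [RHS]big_mkcond /=; apply: eq_bigr => w _.
by rewrite inE; case: (e u w); case: (c u w == i).
Qed.

Lemma no_col01 (V : finType) (e : rel V) r j :
  2 <= deg e r -> j < 2 -> ~ has_qm_nsd_coloring e j.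
Proof.
move=> dr j2 [c [ec qm _]].
have /card_gt0P[w] : 0 < #|[set u | e r u]| by apply: leq_trans dr.
rewrite inE => erw.
case: j j2 ec qm => [|[|//]] _ ec qm.
  by have [_ /andP[h1 h2]] := ec r w erw; have := leq_trans h1 h2.
have := qm r 1; rewrite card_sum.
rewrite (eq_bigr (fun _ => 1)); last by move=> u eru; have [_] := ec r u eru; case: (c r u) => [|[|]].
rewrite sum1_card -/(deg e r).
move: dr; set d := deg e r => dr h.
have : d = #|e r| by rewrite /d /deg; apply: eq_card => u; rewrite inE.
move=> E; rewrite -E in h; lia.
Qed.

Lemma sigma2 (V : finType) (e : rel V) c u :
  edge_coloring e 2 c -> quasi_majority e c -> ~~ odd (deg e u) ->
  sigma e c u = 3 * (deg e u %/ 2).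
Proof.
move=> ec qm ev.
have h1 := qm u 1; have h2 := qm u 2; rewrite !card_sum in h1 h2.
have hd : deg e u = \sum_(w | e u w) ((c u w == 1) : nat) + \sum_(w | e u w) ((c u w == 2) : nat).
  rewrite -big_split /= /deg -sum1_card (eq_bigl (fun w => e u w)); last by move=> w; rewrite inE.
  by apply: eq_bigr => w euw; have [_] := ec u w euw; case: (c u w) => [|[|[|]]].
have hs : sigma e c u = \sum_(w | e u w) ((c u w == 1) : nat) + 2 * \sum_(w | e u w) ((c u w == 2) : nat).
  rewrite big_distrr -big_split /=; apply: eq_bigr => w euw.
  by have [_] := ec u w euw; case: (c u w) => [|[|[|]]].
have := oddE (deg e u); rewrite (negbTE ev) addn0 => hdd.
rewrite hs; lia.
Qed.

Theorem mainTheorem6 (V : finType) (e : rel V) :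
  is_tree e -> 3 <= #|V| ->
  ((~ exists u v : V, [/\ e u v, deg e u = deg e v & ~~ odd (deg e u)]) ->
     chi_qm_sigma_eq e 2) /\
  ((exists u v : V, [/\ e u v, deg e u = deg e v & ~~ odd (deg e u)]) ->
     chi_qm_sigma_eq e 3).
Proof.
move=> [[sym irr] [conn acyc]] cV.
have [r hr] := exists_deg2 (conj sym irr) conn cV.
pose p := par r conn; pose dp := dep r conn.
have pe : forall v, v != r -> e (p v) v by move=> v vr; case: (par_spec conn vr).
have pd : forall v, v != r -> dp v = (dp (p v)).+1 by move=> v vr; case: (par_spec conn vr).
have d0 : forall v, dp v = 0 -> v = r by move=> v; apply: dep0.
have hP3 := P3 sym irr acyc pe pd (dep_r r conn) d0.
have low j : j < 2 -> ~ has_qm_nsd_coloring e j by apply: no_col01 hr.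
have edges : forall c : V -> V -> nat,
  (forall u v, e u v -> (v != r) && (p v == u) -> sigma e c u <> sigma e c v) -> nsd e c.
  move=> c key u v euv; case/orP: (hP3 _ _ euv) => h; first exact: key.
  by apply/nesym; apply: key => //; rewrite sym.
split.
- move=> nobad; split; last by move=> j /low.
  have [c [st [ec qm Hu Hv]]] := gen_col sym pe pd d0 hP3 hr
    (H := H2) (@H2_size) (@H2_range) (@H2_qm).
  exists c; split => //; apply: edges => u v euv /andP[vr /eqP pv].
  have [st2 lt] := Hv v vr.
  have [c2 nz sv] := Hu v.
  have [cu2 _ su] := Hu u.
  rewrite sv; rewrite pv in st2; rewrite st2; apply/eqP; rewrite eq_sym.
  have dv1 : 0 < deg e v by apply/card_gt0P; exists (p v); rewrite inE sym pe.
  apply: H2_nsd => //; first by rewrite nz.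
  + by rewrite -st2.
  + move=> evv; apply/eqP => E.
    have du1 : 0 < deg e u by apply/card_gt0P; exists v; rewrite inE.
    have [Ve Vo] := H2_val (st u).2 du1 cu2.
    rewrite -su in Ve Vo.
    have hu := oddE (deg e u); have hv := oddE (deg e v).
    case: (boolP (odd (deg e u))) => ou.
      by case: (Vo ou) => h; move: hv; rewrite (negbTE evv); lia.
    apply: nobad; exists u, v; split => //.
    have := Ve ou; move: hu hv; rewrite (negbTE evv) (negbTE ou); lia.
- move=> bad; split.
  + have [c [st [ec qm Hu Hv]]] := gen_col sym pe pd d0 hP3 hr
      (H := H3) (@H3_size) (@H3_range) (@H3_qm).
    exists c; split => //; apply: edges => u v euv /andP[vr /eqP pv].
    have [st2 lt] := Hv v vr.
    have [c2 nz sv] := Hu v.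
    rewrite sv; rewrite pv in st2; rewrite st2; apply/eqP; rewrite eq_sym.
    have dv1 : 0 < deg e v by apply/card_gt0P; exists (p v); rewrite inE sym pe.
    apply: H3_nsd => //; first by rewrite nz.
    by rewrite -st2.
  + move=> j; rewrite ltnS leq_eqVlt => /orP[/eqP->|/low//].
    case: bad => u [v [euv duv ev]] [c [ec qm ns]].
    apply: (ns u v euv); rewrite !sigma2 // -?duv //.
Qed.
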